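(* Consider a $2\times N$ switch with traffic pattern consisting of one broadcast flow from input 1 to all $N$ outputs with rate $r_0$ and, for each $i\in[N]$, a unicast from input 2 to output $i$ with rate $r_i$. With fanout splitting but no coding, a speedup of at least $1.5-\frac1N$ is needed to sustain all admissible traffic; i.e. if $s$ is such that $\frac1s\mathbf r\in\mathbf R_{fs}$ for every admissible $\mathbf r$, then $s\ge 1.5-\frac1N$.
   Context: Admissible: $r_i\ge0$ for all $i$, $r_0\le 1$, $\sum_{i=1}^N r_i\le1$, and $r_0+r_i\le1$ for $i\in[N]$. $\mathbf R_{fs}$ is the rate region with fanout splitting but no coding: the set of rational rate vectors for which there is a frame-based schedule (a fixed sequence of $F$ slot-configurations repeated every frame, with each $r_iF$ integer) in which each slot every input idles or sends one original uncoded packet of one of its flows to a subset of that flow's fanout, each output receives from at most one input, and for every flow and frame $n\ge1$ the oldest $rF$ packets ($r$ the flow's rate) queued at the end of frame $n-1$ are delivered to all outputs of the fanout by the end of frame $n$ (all of them if fewer). A switch with speedup $s$ can go through $s$ configurations per slot, so an admissible $\mathbf r$ is sustainable with speedup $s$ iff $\frac1s\mathbf r\in\mathbf R_{fs}$. *)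

(* Defs.v *)
From mathcomp Require Import all_boot all_order all_algebra.
Set Implicit Arguments. Unset Strict Implicit. Unset Printing Implicit Defensive.
Import Order.TTheory GRing.Theory Num.Theory.
Local Open Scope ring_scope.

(* 2 x N switch.  Input 1 carries one broadcast flow (flow 0) with fanout
   all N outputs, rate r0.  Input 2 carries, for each output i : 'I_N,
   a unicast flow to output i with rate r i. *)

Definition admissible (N : nat) (r0 : rat) (r : 'I_N -> rat) : Prop :=
  [/\ 0 <= r0, r0 <= 1, (forall i, 0 <= r i),
      \sum_(i < N) r i <= 1 & (forall i, r0 + r i <= 1)].

(* In slot t:
   - [bc t = None] : input 1 idles;
     [bc t = Some (k, S)] : input 1 sends (uncoded) packet number k of the
     broadcast flow (packets of the frame numbered 0,1,...) to the outputs in S;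
   - [uc t = None] : input 2 idles;
     [uc t = Some (j, k)] : input 2 sends packet number k of the unicast
     flow to output j, to output j.
   Each output receives from at most one input per slot. *)
Definition valid_frame (N F : nat) (bc : 'I_F -> option (nat * {set 'I_N}))
    (uc : 'I_F -> option ('I_N * nat)) : Prop :=
  forall t k S j p, bc t = Some (k, S) -> uc t = Some (j, p) -> j \notin S.

Definition frame_delivers (N F : nat) (bc : 'I_F -> option (nat * {set 'I_N}))
    (uc : 'I_F -> option ('I_N * nat)) (n0 : nat) (n : 'I_N -> nat) : Prop :=
  (forall k, (k < n0)%N -> forall j : 'I_N,
      exists t S, bc t = Some (k, S) /\ j \in S) /\
  (forall j : 'I_N, forall k, (k < n j)%N -> exists t, uc t = Some (j, k)).

(* R_fs : rational rate vectors admitting a frame-based schedule with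
   fanout splitting and no coding: a frame length F > 0 with every r F an
   integer, and a fixed sequence of F slot configurations that, in each
   frame, delivers the r F (oldest queued) packets of each flow to all the
   outputs of its fanout. *)
Definition in_Rfs (N : nat) (r0 : rat) (r : 'I_N -> rat) : Prop :=
  exists (F : nat) (n0 : nat) (n : 'I_N -> nat),
    [/\ (0 < F)%N, r0 * F%:R = n0%:R, (forall i, r i * F%:R = (n i)%:R) &
        exists bc uc, valid_frame bc uc /\ @frame_delivers N F bc uc n0 n].

(* Main.v *)
Require Import Defs.
From mathcomp Require Import all_boot all_order all_algebra.
From mathcomp Require Import zify ring lra.
Import Order.TTheory GRing.Theory Num.Theory.
Set Implicit Arguments. Unset Strict Implicit.
Section S0.

Section Count.
Variables (N F : nat) (bc : 'I_F -> option (nat * {set 'I_N}))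
  (uc : 'I_F -> option ('I_N * nat)).

Definition Bm m t : bool := if bc t is Some (k, _) then k < m else false.
Definition Cm m t : bool := if bc t is Some (k, _) then k == m else false.
Definition Xm m t : bool := if uc t is None then
  (if bc t is Some (k, Sx) then (k < m) && (Sx == [set: 'I_N]) else false) else false.
Definition XCm m t : bool := if uc t is None then
  (if bc t is Some (k, Sx) then (k == m) && (Sx == [set: 'I_N]) else false) else false.
Definition Um j m t : bool := if uc t is Some (j', k) then (j' == j) && (k < m) else false.
Definition Uj j m t : bool := uc t == Some (j, m).

Lemma BmS m t : (Bm m.+1 t : nat) = Bm m t + Cm m t.
Proof. rewrite /Bm /Cm; case: (bc t) => [[k Sx]|] //=; rewrite ltnS leq_eqVlt; by case: ltngtP. Qed.
Lemma XmS m t : (Xm m.+1 t : nat) = Xm m t + XCm m t.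
Proof.
rewrite /Xm /XCm; case: (uc t) => [//|]; case: (bc t) => [[k Sx]|] //=.
case: (Sx == _); rewrite ?andbT ?andbF //.
rewrite ltnS leq_eqVlt; case: ltngtP => //.
Qed.
Lemma UmS j m t : (Um j m.+1 t : nat) = Um j m t + Uj j m t.
Proof.
rewrite /Um /Uj; case: (uc t) => [[j' k]|] //=.
case: eqP => [->|ne] /=.
  case: (Some (j, k) =P Some (j, m)) => [[->]|ne2]; first by rewrite ltnSn ltnn.
  rewrite ltnS leq_eqVlt; case: eqP => [e|] //=; [by case: ne2; rewrite e | by case: (k < m)].
case: (Some (j', k) =P Some (j, m)) => // -[e]; by case: ne.
Qed.

Lemma sum_pos (P : 'I_F -> bool) t0 : P t0 -> 1 <= \sum_t (P t : nat).
Proof. move=> H; rewrite (bigD1 t0) //= H; exact: leq_addr. Qed.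

Lemma sum_two (P : 'I_F -> bool) t1 t2 : P t1 -> P t2 -> t1 != t2 ->
  2 <= \sum_t (P t : nat).
Proof.
move=> H1 H2 H; rewrite (bigD1 t1) //= H1 (bigD1 t2) /=; last by rewrite eq_sym H.
by rewrite H2 addnA leq_addr.
Qed.

Hypothesis valid : valid_frame bc uc.

Lemma bcast_step (N0 : (0 < N)%N) m :
  (forall j : 'I_N, exists t Sx, bc t = Some (m, Sx) /\ j \in Sx) ->
  2 <= \sum_t (Cm m t : nat) + \sum_t (XCm m t : nat).
Proof.
move=> D.
have j0 : 'I_N := Ordinal N0.
have [t1 [S1 [E1 I1]]] := D j0.
have C1 : Cm m t1 by rewrite /Cm E1.
case: (boolP [exists t, XCm m t]) => [/existsP [t2 X2]|nX].
  have C2 : Cm m t2.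
    move: X2; rewrite /XCm /Cm; case: (uc t2) => //; case: (bc t2) => [[k Sx]|] //=.
    by case/andP.
  have := sum_pos C2; have := sum_pos X2; lia.
have NS : S1 != [set: 'I_N].
  apply/negP => /eqP ES.
  case E2: (uc t1) => [[j p]|].
    by have := valid E1 E2; rewrite ES inE.
  move/existsPn: nX => /(_ t1); by rewrite /XCm E2 E1 ES !eqxx.
have [j Hj] : exists j, j \notin S1.
  case: (boolP [exists j, j \notin S1]) => [/existsP//|/existsPn H].
  case/negP: NS; apply/eqP/setP => x; rewrite inE; have := H x; by rewrite negbK.
have [t2 [S2 [E2 I2]]] := D j.
have C2 : Cm m t2 by rewrite /Cm E2.
apply: leq_trans (leq_addr _ _).
apply: (sum_two C1 C2); apply/negP => /eqP e; subst t2.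
move: E2; rewrite E1 => -[e]; subst S2; by rewrite I2 in Hj.
Qed.

Lemma bcast_count n0 (N0 : (0 < N)%N) :
  (forall k, (k < n0)%N -> forall j : 'I_N, exists t Sx, bc t = Some (k, Sx) /\ j \in Sx) ->
  forall m, m <= n0 -> 2 * m <= \sum_t (Bm m t : nat) + \sum_t (Xm m t : nat).
Proof.
move=> D; elim=> [|m IH] Hm; first by [].
have := bcast_step N0 (D m Hm).
have := IH (ltnW Hm).
under [\sum_t (Bm m.+1 t : nat)]eq_bigr => t _ do rewrite BmS.
under [\sum_t (Xm m.+1 t : nat)]eq_bigr => t _ do rewrite XmS.
rewrite !big_split /=. lia.
Qed.

Lemma ucast_count j m :
  (forall k, (k < m)%N -> exists t, uc t = Some (j, k)) ->
  m <= \sum_t (Um j m t : nat).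
Proof.
elim: m => [|m IH] D; first by [].
under [\sum_t (Um j m.+1 t : nat)]eq_bigr => t _ do rewrite UmS.
rewrite big_split /=.
have := IH (fun k Hk => D k (ltnW Hk)).
have [t Ht] := D m (ltnSn m).
have : 1 <= \sum_t (Uj j m t : nat) by apply: (sum_pos (t0 := t)); rewrite /Uj Ht.
move=> a b; rewrite -addn1; exact: leq_add b a.
Qed.
End Count.
End S0.
Unset Implicit Arguments.
Lemma sum_eq1 N (j' : 'I_N) : \sum_(j < N) ((j' == j) : nat) = 1.
Proof.
rewrite (bigD1 j') //= eqxx big1 // => j /negbTE; by rewrite eq_sym => ->.
Qed.

Lemma slot_bound N F bc (uc : 'I_F -> option ('I_N * nat)) n0 (n : 'I_N -> nat) :
  \sum_t (Xm bc uc n0 t : nat) + \sum_j \sum_t (Um uc j (n j) t : nat) <= F.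
Proof.
rewrite exchange_big -big_split /=.
rewrite -[F in _ <= F]card_ord -sum1_card.
apply: leq_sum => t _.
rewrite /Xm /Um; case: (uc t) => [[j' k]|] /=.
  rewrite add0n -(@sum_eq1 _ j'); apply: leq_sum => j _.
  by case: (j' == j); case: (k < _).
by rewrite big1 // addn0; case: (bc t) => [[k Sx]|] //=; case: (_ && _).
Qed.

Lemma B_bound N F (bc : 'I_F -> option (nat * {set 'I_N})) m :
  \sum_t (Bm bc m t : nat) <= F.
Proof.
rewrite -[F in _ <= F]card_ord -sum1_card; apply: leq_sum => t _; by case: (Bm _ _ _).
Qed.

Lemma count_main N F bc uc n0 (n : 'I_N -> nat) : (0 < N)%N ->
  valid_frame bc uc -> @frame_delivers N F bc uc n0 n ->
  2 * n0 + \sum_j n j <= 2 * F.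
Proof.
move=> N0 V [D1 D2].
have h1 := bcast_count V N0 D1 (leqnn n0).
have h2 : \sum_j n j <= \sum_j \sum_t (Um uc j (n j) t : nat).
  apply: leq_sum => j _; exact: ucast_count (D2 j).
have h3 := @slot_bound N F bc uc n0 n.
have h4 := @B_bound N F bc n0.
lia.
Qed.
Local Open Scope ring_scope.
Theorem corollary5 (N : nat) (s : rat) :
  (0 < N)%N -> 0 < s ->
  (forall (r0 : rat) (r : 'I_N -> rat), admissible r0 r ->
     in_Rfs (r0 / s) (fun i => r i / s)) ->
  3%:R / 2%:R - 1 / N%:R <= s.
Proof.
move=> N0 s0 H.
have Npos : 0 < N%:R :> rat by rewrite ltr0n.
set a := 1 / N%:R.
have a0 : 0 <= a by rewrite /a divr_ge0 // ler0n.
have a1 : a <= 1 by rewrite /a ler_pdivrMr // mul1r ler1n.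
have aN : N%:R * a = 1 by rewrite /a mul1r divff // gt_eqF.
have adm : admissible (1 - a) (fun _ : 'I_N => a).
  split => //; first lra; first lra.
    by rewrite sumr_const card_ord -mulr_natl aN.
  move=> _; lra.
have [F [n0 [n [F0 E0 En [bc [uc [V D]]]]]]] := H _ _ adm.
have C := @count_main N F bc uc n0 n N0 V D.
have Fpos : 0 < F%:R :> rat by rewrite ltr0n.
have C' : 2 * n0%:R + \sum_j (n j)%:R <= 2 * F%:R :> rat.
  have := C; rewrite -(ler_nat rat) natrD natrM -natr_sum natrM.
  done.
have Es : \sum_j (n j)%:R = F%:R / s :> rat.
  under eq_bigr => j _ do rewrite -En.
  rewrite sumr_const card_ord -mulr_natl /a; field; rewrite ?gt_eqF // ?andbT ?ltr0n.
rewrite Es -E0 in C'.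
have e1 : 2 * ((1 - a) / s * F%:R) + F%:R / s = ((3 - 2 * a) * F%:R) / s by ring.
rewrite e1 ler_pdivrMr // in C'.
have e2 : 2 * F%:R * s = (2 * s) * F%:R by ring.
rewrite e2 ler_pM2r // in C'.
lra.
Qed.
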